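(* Let $\mathbb K$ be a naturally ordered positive semiring, let $\mathrm{q}_{\mathrm{path}}=\exists x\exists y\exists z\,(R(x;y)\wedge S(y;z))$ with $\Sigma$ the key constraints stating that the first attribute of $R$ and the first attribute of $S$ are keys. Then for every $\mathbb K$-database $\mathfrak D$ with active domain $D$, \[\mathrm{mCA}_{\mathbb K}(\mathrm{q}_{\mathrm{path}},\Sigma,\mathfrak D)=\sum_{a\in D}\ \min_{b\in D:\,R^{\mathfrak D}(a,b)\neq0}\Big(R^{\mathfrak D}(a,b)\times\min_{c\in D:\,S^{\mathfrak D}(b,c)\neq 0}S^{\mathfrak D}(b,c)\Big),\] with the convention $\min(\emptyset)=0$. Equivalently, this value is the value on $\mathfrak D$ of the $\mathcal L_{\mathbb K}$-sentence $\exists x\,\nabla_{R(x,y)}y.\big(R(x,y)\times\nabla_{S(y,z)}z.\,S(y,z)\big)$, where $\nabla_G$ denotes guarded minimization (minimum over the elements satisfying the guard with non-zero value, and $0$ if there are none).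
   Context: A commutative semiring $\mathbb K=(K,+,\times,0,1)$ is positive if $a+b=0$ implies $a=b=0$ and it has no zero divisors; naturally ordered if $a\le_{\mathbb K}b:\iff\exists c\,(a+c=b)$ is a total order; minima are w.r.t. $\le_{\mathbb K}$. A $\mathbb K$-database $\mathfrak D$ assigns to $R,S$ binary functions $R^{\mathfrak D},S^{\mathfrak D}:\mathrm A^2\to K$ with finite support; the active domain $D$ is the non-empty set of values occurring in tuples with non-zero annotation. $\mathfrak D'\subseteq\mathfrak D$ means supports are included and values agree on the support of $\mathfrak D'$. A repair of $\mathfrak D$ is a $\subseteq$-maximal $\mathfrak D'\subseteq\mathfrak D$ such that no two distinct tuples with non-zero annotation in $R^{\mathfrak D'}$ (resp. $S^{\mathfrak D'}$) share their first component. The value of a closed CQ $\exists\vec y(R_1(\vec z_1)\wedge\dots\wedge R_k(\vec z_k))$ on $\mathfrak D$ is $\sum_{\vec a\in D^{|\vec y|}}\prod_i R_i^{\mathfrak D}(\vec z_i[\vec a/\vec y])$, and $\mathrm{mCA}_{\mathbb K}(q,\Sigma,\mathfrak D)$ is the minimum of this value over all repairs of $\mathfrak D$. *)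

(* Defs.v *)
From HB Require Import structures.
From mathcomp Require Import all_boot all_algebra.
From mathcomp Require Import finmap.
From Stdlib Require Import ClassicalEpsilon.
Set Implicit Arguments. Unset Strict Implicit. Unset Printing Implicit Defensive.
Import GRing.Theory.
Local Open Scope fset_scope.
Local Open Scope ring_scope.

Section Semiring.
Variable K : comPzSemiRingType.

Definition positive_semiring : Prop :=
  (forall a b : K, a + b = 0 -> a = 0 /\ b = 0) /\
  (forall a b : K, a * b = 0 -> a = 0 \/ b = 0).

Definition leK (a b : K) : Prop := exists c, a + c = b.

(* naturally ordered: the natural preorder is a total order
   (reflexivity and transitivity always hold) *)
Definition naturally_ordered : Prop :=
  (forall a b : K, leK a b -> leK b a -> a = b) /\
  (forall a b : K, leK a b \/ leK b a).

Definition minK2 (a b : K) : K :=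
  if excluded_middle_informative (leK a b) then a else b.

Definition minK (s : seq K) : K :=
  match s with
  | [::] => 0
  | x :: s' => foldr minK2 x s'
  end.

Definition is_minimum (P : K -> Prop) (m : K) : Prop :=
  P m /\ forall x, P x -> leK m x.
End Semiring.

Section Databases.
Variables (A : choiceType) (K : comPzSemiRingType).

Record db := DB {
  relR : {fsfun A * A -> K with 0};
  relS : {fsfun A * A -> K with 0} }.

Definition adom (d : db) : {fset A} :=
  [fset t.1 | t in finsupp (relR d)] `|` [fset t.2 | t in finsupp (relR d)]
  `|` [fset t.1 | t in finsupp (relS d)] `|` [fset t.2 | t in finsupp (relS d)].

Definition subdb (d' d : db) : Prop :=
  (forall t, relR d' t != 0 -> relR d t != 0 /\ relR d t = relR d' t) /\
  (forall t, relS d' t != 0 -> relS d t != 0 /\ relS d t = relS d' t).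

Definition satisfies_keys (d : db) : Prop :=
  (forall a b b', relR d (a, b) != 0 -> relR d (a, b') != 0 -> b = b') /\
  (forall a b b', relS d (a, b) != 0 -> relS d (a, b') != 0 -> b = b').

Definition repair (d' d : db) : Prop :=
  subdb d' d /\ satisfies_keys d' /\
  (forall d'', subdb d'' d -> satisfies_keys d'' -> subdb d' d'' -> d'' = d').

Definition qpath_value (d : db) : K :=
  \sum_(x <- adom d) \sum_(y <- adom d) \sum_(z <- adom d)
     relR d (x, y) * relS d (y, z).

Definition is_mCA_qpath (d : db) (m : K) : Prop :=
  is_minimum (fun v => exists d', repair d' d /\ v = qpath_value d') m.

Definition qpath_rhs (d : db) : K :=
  \sum_(a <- adom d)
     minK [seq relR d (a, b) *
               minK [seq relS d (b, c) | c <- adom d & relS d (b, c) != 0]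
          | b <- adom d & relR d (a, b) != 0].
End Databases.

(* Main.v *)
Require Import Defs.
From HB Require Import structures.
From mathcomp Require Import all_boot all_algebra.
From mathcomp Require Import finmap.
From Stdlib Require Import Classical ClassicalEpsilon.
Set Implicit Arguments. Unset Strict Implicit. Unset Printing Implicit Defensive.
Import GRing.Theory.
Local Open Scope fset_scope.
Local Open Scope ring_scope.

Section Ord.
Variable K : comPzSemiRingType.
Hypothesis htot : forall a b : K, leK a b \/ leK b a.

Lemma leK_refl (a : K) : leK a a. Proof. by exists 0; rewrite addr0. Qed.
Lemma leK_trans (a b c : K) : leK a b -> leK b c -> leK a c.
Proof. by move=> [x <-] [y <-]; exists (x + y); rewrite addrA. Qed.
Lemma le0K (a : K) : leK 0 a. Proof. by exists a; rewrite add0r. Qed.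
Lemma leK_add (a b c e : K) : leK a b -> leK c e -> leK (a + c) (b + e).
Proof. by move=> [x <-] [y <-]; exists (x + y); rewrite -!addrA (addrCA c). Qed.
Lemma leK_addr (a b : K) : leK a (a + b). Proof. by exists b. Qed.
Lemma leK_addl (a b c : K) : leK a b -> leK a (c + b).
Proof. move=> [x <-]; exists (c + x); rewrite addrCA addrA. by rewrite (addrC c). Qed.
Lemma leK_mul (a b c : K) : leK a b -> leK (c * a) (c * b).
Proof. by move=> [x <-]; exists (c * x); rewrite mulrDr. Qed.

Lemma minK2_in (a b : K) : minK2 a b = a \/ minK2 a b = b.
Proof. by rewrite /minK2; case: excluded_middle_informative; auto. Qed.
Lemma minK2_l (a b : K) : leK (minK2 a b) a.
Proof.
rewrite /minK2; case: excluded_middle_informative => h; first exact: leK_refl.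
by case: (htot a b).
Qed.
Lemma minK2_r (a b : K) : leK (minK2 a b) b.
Proof. rewrite /minK2; case: excluded_middle_informative => h //; exact: leK_refl. Qed.

Lemma minK_in (s : seq K) : s != [::] -> minK s \in s.
Proof.
case: s => // x s _ /=; elim: s => [|y s IH] /=; first by rewrite inE.
case: (minK2_in y (foldr (@minK2 K) x s)) => ->; first by rewrite !inE eqxx orbT.
move: IH; rewrite !inE => /orP[->|->] //; by rewrite !orbT.
Qed.
Lemma minK_le (s : seq K) x : x \in s -> leK (minK s) x.
Proof.
case: s => // y s /=; elim: s x => [|z s IH] x /=.
  by rewrite inE => /eqP ->; exact: leK_refl.
rewrite !inE => /or3P[/eqP->| /eqP->|xs].
- apply: leK_trans (minK2_r _ _) _; apply: IH; by rewrite inE eqxx.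
- exact: minK2_l.
- apply: leK_trans (minK2_r _ _) _; apply: IH; by rewrite inE xs orbT.
Qed.

Lemma leK_sum (I : eqType) (s : seq I) (F G : I -> K) :
  (forall i, i \in s -> leK (F i) (G i)) -> leK (\sum_(i <- s) F i) (\sum_(i <- s) G i).
Proof.
elim: s => [|x s IH] h; first by rewrite !big_nil; exact: leK_refl.
rewrite !big_cons; apply: leK_add; first by apply: h; rewrite inE eqxx.
by apply: IH => i hi; apply: h; rewrite inE hi orbT.
Qed.
Lemma leK_term (I : eqType) (s : seq I) (F : I -> K) i :
  i \in s -> leK (F i) (\sum_(j <- s) F j).
Proof.
elim: s => // x s IH; rewrite inE big_cons => /orP[/eqP->|hi].
  exact: leK_addr.
by apply: leK_addl; apply: IH.
Qed.
End Ord.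
Section Star.
Variables (A : choiceType) (K : comPzSemiRingType).
Implicit Types (Rd : {fsfun A * A -> K with 0}).

Definition star Rd (h : A -> A) : {fsfun A * A -> K with 0} :=
  [fsfun t in finsupp Rd => if t.2 == h t.1 then Rd t else 0].

Lemma starE Rd h a b : star Rd h (a, b) = if b == h a then Rd (a, b) else 0.
Proof.
rewrite /star fsfun_fun mem_finsupp /=.
by have [->|nz] := eqVneq (Rd (a, b)) 0; rewrite /=; case: ifP.
Qed.

Lemma star_sub Rd h t : star Rd h t != 0 -> Rd t != 0 /\ Rd t = star Rd h t.
Proof. case: t => a b; rewrite starE; case: ifP => //; by rewrite eqxx. Qed.

Lemma star_key Rd h a b b' : star Rd h (a, b) != 0 -> star Rd h (a, b') != 0 -> b = b'.
Proof.
rewrite !starE; case: (eqVneq b (h a)) => [->|nb]; last by rewrite eqxx.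
by case: (eqVneq b' (h a)) => [->|nb'] //; rewrite eqxx.
Qed.

Lemma star_max Rd (h : A -> A) (R'' : {fsfun A * A -> K with 0}) :
  (forall a b, Rd (a, b) != 0 -> Rd (a, h a) != 0) ->
  (forall t, R'' t != 0 -> Rd t != 0 /\ Rd t = R'' t) ->
  (forall a b b', R'' (a, b) != 0 -> R'' (a, b') != 0 -> b = b') ->
  (forall t, star Rd h t != 0 -> R'' t != 0 /\ R'' t = star Rd h t) ->
  R'' = star Rd h.
Proof.
move=> hh s1 k s2; apply/fsfunP => [[a b]].
case: (eqVneq (R'' (a, b)) 0) => h0.
  case: (eqVneq (star Rd h (a, b)) 0) => h1; first by rewrite h0 h1.
  by have [] := s2 _ h1; rewrite h0 eqxx.
have [hR eR] := s1 _ h0.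
have hf := hh _ _ hR.
have hs : star Rd h (a, h a) != 0 by rewrite starE eqxx.
have [hs2 _] := s2 _ hs.
have eb := k _ _ _ h0 hs2.
by rewrite starE eb eqxx -eb eR.
Qed.
End Star.
Section DB.
Variables (A : choiceType) (K : comPzSemiRingType).
Implicit Types (d : db A K).

Lemma adom_R d a b : relR d (a, b) != 0 -> (a \in adom d) /\ (b \in adom d).
Proof.
move=> h; have ht : (a, b) \in finsupp (relR d) by rewrite mem_finsupp.
split; rewrite /adom !inE.
  by rewrite (in_imfset _ (fun t : A * A => t.1) ht).
by rewrite (in_imfset _ (fun t : A * A => t.2) ht) !orbT.
Qed.

Lemma adom_S d a b : relS d (a, b) != 0 -> (a \in adom d) /\ (b \in adom d).
Proof.
move=> h; have ht : (a, b) \in finsupp (relS d) by rewrite mem_finsupp.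
split; rewrite /adom !inE.
  by rewrite (in_imfset _ (fun t : A * A => t.1) ht) !orbT.
by rewrite (in_imfset _ (fun t : A * A => t.2) ht) !orbT.
Qed.

Lemma qpath_value_sub d' d : subdb d' d ->
  qpath_value d' = \sum_(x <- adom d) \sum_(y <- adom d) \sum_(z <- adom d)
     relR d' (x, y) * relS d' (y, z).
Proof.
move=> [sR sS].
have sub : adom d' `<=` adom d.
  apply/fsubsetP => x; rewrite {1}/adom !inE => /orP[/orP[/orP[]|]|].
  - case/imfsetP => -[u v] /=; rewrite mem_finsupp => /sR[h _] ->.
    case: (adom_R h) => ha hb; first [by move: ha; rewrite /adom !inE | by move: hb; rewrite /adom !inE].
  - case/imfsetP => -[u v] /=; rewrite mem_finsupp => /sR[h _] ->.
    case: (adom_R h) => ha hb; first [by move: ha; rewrite /adom !inE | by move: hb; rewrite /adom !inE].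
  - case/imfsetP => -[u v] /=; rewrite mem_finsupp => /sS[h _] ->.
    case: (adom_S h) => ha hb; first [by move: ha; rewrite /adom !inE | by move: hb; rewrite /adom !inE].
  - case/imfsetP => -[u v] /=; rewrite mem_finsupp => /sS[h _] ->.
    case: (adom_S h) => ha hb; first [by move: ha; rewrite /adom !inE | by move: hb; rewrite /adom !inE].
rewrite /qpath_value.
transitivity (\sum_(x <- adom d') \sum_(y <- adom d') \sum_(z <- adom d)
     relR d' (x, y) * relS d' (y, z)).
  apply: eq_bigr => x _; apply: eq_bigr => y _.
  apply: big_fset_incl => // z _ zn.
  case: (eqVneq (relS d' (y, z)) 0) => [->|h]; first by rewrite mulr0.
  by case: (adom_S h) => _ hz; rewrite hz in zn.
transitivity (\sum_(x <- adom d') \sum_(y <- adom d) \sum_(z <- adom d)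
     relR d' (x, y) * relS d' (y, z)).
  apply: eq_bigr => x _.
  apply: big_fset_incl => // y _ yn.
  case: (eqVneq (relR d' (x, y)) 0) => [->|h].
    by rewrite big1 // => z _; rewrite mul0r.
  by case: (adom_R h) => _ hz; rewrite hz in yn.
apply: big_fset_incl => // x _ xn.
apply: big1 => y _.
case: (eqVneq (relR d' (x, y)) 0) => [->|h].
  by rewrite big1 // => z _; rewrite mul0r.
by case: (adom_R h) => hz _; rewrite hz in xn.
Qed.
End DB.

Lemma rep_R_ (A : choiceType) (K : comPzSemiRingType) (d' d : db A K) a b0 :
  repair d' d -> relR d (a, b0) != 0 ->
  exists b, relR d' (a, b) != 0.
Proof.
move=> [[sR sS] [[kR kS] mx]] h0.
apply: NNPP => hn.
have z : forall b, relR d' (a, b) = 0.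
  move=> b; apply/eqP; apply: contraT => nz; case: hn; by exists b.
pose R'' := [fsfun relR d' with (a, b0) |-> relR d (a, b0)].
have RE : forall t, R'' t = if t == (a, b0) then relR d (a, b0) else relR d' t.
  by move=> t; rewrite fsfun_withE.
pose d'' := DB R'' (relS d').
have e : d'' = d'.
  apply: mx.
  - split => //= t; rewrite RE; case: (eqVneq t (a, b0)) => [->|_]; last exact: sR.
    by move=> h; split.
  - split => //= x u u'; rewrite !RE !xpair_eqE.
    case: (eqVneq x a) => [->|nx] /=; last exact: kR.
    rewrite !z; case: (eqVneq u b0) => [->|nu]; case: (eqVneq u' b0) => [->|nu'] //=;
      by rewrite eqxx.
  - split => //= t ht; rewrite RE; case: (eqVneq t (a, b0)) => [et|_] //.
    by move: ht; rewrite et z eqxx.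
have : R'' (a, b0) = relR d' (a, b0) by rewrite -e.
by rewrite RE eqxx z => h; move: h0; rewrite h eqxx.
Qed.

Lemma rep_S_ (A : choiceType) (K : comPzSemiRingType) (d' d : db A K) a b0 :
  repair d' d -> relS d (a, b0) != 0 ->
  exists b, relS d' (a, b) != 0.
Proof.
move=> [[sR sS] [[kR kS] mx]] h0.
apply: NNPP => hn.
have z : forall b, relS d' (a, b) = 0.
  move=> b; apply/eqP; apply: contraT => nz; case: hn; by exists b.
pose S'' := [fsfun relS d' with (a, b0) |-> relS d (a, b0)].
have SE : forall t, S'' t = if t == (a, b0) then relS d (a, b0) else relS d' t.
  by move=> t; rewrite fsfun_withE.
pose d'' := DB (relR d') S''.
have e : d'' = d'.
  apply: mx.
  - split => //= t; rewrite SE; case: (eqVneq t (a, b0)) => [->|_]; last exact: sS.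
    by move=> h; split.
  - split => //= x u u'; rewrite !SE !xpair_eqE.
    case: (eqVneq x a) => [->|nx] /=; last exact: kS.
    rewrite !z; case: (eqVneq u b0) => [->|nu]; case: (eqVneq u' b0) => [->|nu'] //=;
      by rewrite eqxx.
  - split => //= t ht; rewrite SE; case: (eqVneq t (a, b0)) => [et|_] //.
    by move: ht; rewrite et z eqxx.
have : S'' (a, b0) = relS d' (a, b0) by rewrite -e.
by rewrite SE eqxx z => h; move: h0; rewrite h eqxx.
Qed.
Section Main.
Variables (K : comPzSemiRingType) (A : choiceType).
Hypothesis hord : naturally_ordered K.
Variable d : db A K.

Let htot : forall a b : K, leK a b \/ leK b a := hord.2.

Definition bs a := [seq b <- adom d | relR d (a, b) != 0].
Definition cs b := [seq c <- adom d | relS d (b, c) != 0].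
Definition mS b := minK [seq relS d (b, c) | c <- cs b].
Definition mR a := minK [seq relR d (a, b) * mS b | b <- bs a].

Lemma rhsE : qpath_rhs d = \sum_(a <- adom d) mR a.
Proof. by []. Qed.

Definition gg b := nth b (cs b) (find (fun c => relS d (b, c) == mS b) (cs b)).
Definition ff a := nth a (bs a) (find (fun b => relR d (a, b) * mS b == mR a) (bs a)).

Lemma gg_spec b : cs b != [::] -> gg b \in cs b /\ relS d (b, gg b) = mS b.
Proof.
move=> ne.
have : mS b \in [seq relS d (b, c) | c <- cs b].
  by apply: minK_in; rewrite -size_eq0 size_map size_eq0.
case/mapP => c hc ec.
have hh : has (fun c => relS d (b, c) == mS b) (cs b).
  by apply/hasP; exists c => //; rewrite ec.
split; first by rewrite /gg mem_nth // -has_find.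
by apply/eqP; exact: (nth_find b hh).
Qed.

Lemma ff_spec a : bs a != [::] -> ff a \in bs a /\ relR d (a, ff a) * mS (ff a) = mR a.
Proof.
move=> ne.
have : mR a \in [seq relR d (a, b) * mS b | b <- bs a].
  by apply: minK_in; rewrite -size_eq0 size_map size_eq0.
case/mapP => c hc ec.
have hh : has (fun b => relR d (a, b) * mS b == mR a) (bs a).
  by apply/hasP; exists c => //; rewrite ec.
split; first by rewrite /ff mem_nth // -has_find.
by apply/eqP; exact: (nth_find a hh).
Qed.

Lemma mem_bs a b : (b \in bs a) = (b \in adom d) && (relR d (a, b) != 0).
Proof. by rewrite mem_filter andbC. Qed.
Lemma mem_cs a b : (b \in cs a) = (b \in adom d) && (relS d (a, b) != 0).
Proof. by rewrite mem_filter andbC. Qed.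

Lemma ff_nz a b : relR d (a, b) != 0 -> relR d (a, ff a) != 0.
Proof.
move=> h; have hb : b \in bs a by rewrite mem_bs h andbT; case: (adom_R h).
have ne : bs a != [::] by apply/eqP => e; rewrite e in hb.
by have [] := ff_spec ne; rewrite mem_bs => /andP[].
Qed.
Lemma gg_nz a b : relS d (a, b) != 0 -> relS d (a, gg a) != 0.
Proof.
move=> h; have hb : b \in cs a by rewrite mem_cs h andbT; case: (adom_S h).
have ne : cs a != [::] by apply/eqP => e; rewrite e in hb.
by have [] := gg_spec ne; rewrite mem_cs => /andP[].
Qed.

Definition dstar := DB (star (relR d) ff) (star (relS d) gg).

Lemma dstar_repair : repair dstar d.
Proof.
split; [|split].
- split => t; exact: star_sub.
- split => a b b'; exact: star_key.
- move=> [R'' S''] [s1 s2] [k1 k2] [s3 s4] /=.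
  congr DB; apply: star_max => //; [exact: ff_nz | exact: gg_nz].
Qed.

Lemma sumS b : \sum_(z <- adom d) star (relS d) gg (b, z) = mS b.
Proof.
case: (eqVneq (cs b) [::]) => e.
  rewrite /mS e /= big1 // => z _; rewrite starE; case: ifP => // _.
  apply/eqP; apply: contraT => h.
  have : z \in cs b by rewrite mem_cs h andbT; case: (adom_S h).
  by rewrite e.
have [hg eg] := gg_spec e.
have hgd : gg b \in adom d by move: hg; rewrite mem_cs => /andP[].
rewrite (bigD1_seq (gg b)) ?fset_uniq //= starE eqxx eg big1 ?addr0 //.
by move=> z nz; rewrite starE (negbTE nz).
Qed.

Lemma dstar_value : qpath_value dstar = qpath_rhs d.
Proof.
rewrite (qpath_value_sub (proj1 dstar_repair)) rhsE; apply: eq_bigr => a _ /=.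
case: (eqVneq (bs a) [::]) => e.
  rewrite /mR e /= big1 // => y _; rewrite big1 // => z _.
  rewrite starE; case: ifP => _; last by rewrite mul0r.
  case: (eqVneq (relR d (a, y)) 0) => [->|h]; first by rewrite mul0r.
  have : y \in bs a by rewrite mem_bs h andbT; case: (adom_R h).
  by rewrite e.
have [hf ef] := ff_spec e.
have hfd : ff a \in adom d by move: hf; rewrite mem_bs => /andP[].
rewrite (bigD1_seq (ff a)) ?fset_uniq //= [X in _ + X]big1 ?addr0; last first.
  by move=> y ny; rewrite big1 // => z _; rewrite starE (negbTE ny) mul0r.
by rewrite -mulr_sumr sumS starE eqxx.
Qed.

Lemma lower d' : repair d' d -> leK (qpath_rhs d) (qpath_value d').
Proof.
move=> rep; rewrite (qpath_value_sub (proj1 rep)) rhsE.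
have [[sR sS] _] := rep.
apply: leK_sum => a _.
case: (eqVneq (bs a) [::]) => e; first by rewrite /mR e; exact: le0K.
case E: (bs a) e => [//|b0 t] _.
have : b0 \in bs a by rewrite E inE eqxx.
rewrite mem_bs => /andP[_ h0].
have [b hb] := rep_R_ rep h0.
have [hbd eb] := sR _ hb.
have hbD : b \in adom d by case: (adom_R hbd).
apply: (leK_trans (b := relR d (a, b) * mS b)).
  rewrite /mR; apply: (minK_le htot); apply: map_f; by rewrite mem_bs hbD hbd.
apply: (leK_trans _ (leK_term _ hbD)).
rewrite -mulr_sumr eb; apply: leK_mul.
case: (eqVneq (cs b) [::]) => e'; first by rewrite /mS e'; exact: le0K.
case E': (cs b) e' => [//|c0 t'] _.
have : c0 \in cs b by rewrite E' inE eqxx.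
rewrite mem_cs => /andP[_ hc0].
have [c hc] := rep_S_ rep hc0.
have [hcd ec] := sS _ hc.
have hcD : c \in adom d by case: (adom_S hcd).
apply: (leK_trans (b := relS d (b, c))).
  rewrite /mS; apply: (minK_le htot); apply: map_f; by rewrite mem_cs hcD hcd.
by rewrite ec; exact: (@leK_term _ _ _ (fun z => relS d' (b, z)) _ hcD).
Qed.
End Main.

Theorem mainTheorem8 (K : comPzSemiRingType) (A : choiceType)
  (hpos : positive_semiring K) (hord : naturally_ordered K)
  (d : db A K) (hne : adom d != fset0) :
  is_mCA_qpath d (qpath_rhs d).
Proof.
split.
  exists (dstar d); split; [exact: dstar_repair | by rewrite dstar_value].
by move=> v [d' [rep ->]]; exact: lower.
Qed.
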